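(* Let $(Q,\cdot)$ be a Ward quasigroup with $xx=e$ for all $x\in Q$, and let $\mathrm{ret}(Q,\cdot,e)=(Q,\circ)$ denote the group with $x\circ y=x\cdot(e\cdot y)$. (a) If $(Q,\cdot,\diamond)$ is a double magma for some magma $(Q,\diamond)$ having a unit $1$ (i.e. $1\diamond x=x\diamond 1=x$ for all $x$), then $x\diamond y=x\cdot(e\cdot y)$ for all $x,y$ (so $(Q,\diamond)=\mathrm{ret}(Q,\cdot,e)$) and $(Q,\cdot)$ is medial. (b) If $(Q,\cdot)$ is medial and $(Q,\circ,\star)$ is a double magma for some left cancellative magma $(Q,\star)$ which is unipotent (i.e. $x\star x=y\star y$ for all $x,y$) and contains a right unit $r$ (i.e. $x\star r=x$ for all $x$), then the operations $\cdot$ and $\star$ coincide.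
   Context: A Ward quasigroup is a quasigroup $(Q,\cdot)$ satisfying $(xz)(yz)=xy$ for all $x,y,z$; there is $e$ with $xx=e$ for all $x$, and $x\circ y=x\cdot(e\cdot y)$ defines a group with identity $e$. A triple $(Q,\ast,\star)$ is a double magma if $(x\ast y)\star(z\ast w)=(x\star z)\ast(y\star w)$ for all $x,y,z,w$. A magma is medial if $(xy)(zw)=(xz)(yw)$ for all $x,y,z,w$; left cancellative if $ax=ay$ implies $x=y$. *)

(* Defs.v *)
Definition quasigroup {Q : Type} (m : Q -> Q -> Q) : Prop :=
  (forall a b : Q, exists x, m a x = b /\ forall x', m a x' = b -> x' = x) /\
  (forall a b : Q, exists y, m y a = b /\ forall y', m y' a = b -> y' = y).

Definition ward_quasigroup {Q : Type} (m : Q -> Q -> Q) : Prop :=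
  quasigroup m /\ forall x y z : Q, m (m x z) (m y z) = m x y.

Definition ret {Q : Type} (m : Q -> Q -> Q) (e : Q) : Q -> Q -> Q :=
  fun x y => m x (m e y).

Definition double_magma {Q : Type} (a s : Q -> Q -> Q) : Prop :=
  forall x y z w : Q, s (a x y) (a z w) = a (s x z) (s y w).

Definition medial {Q : Type} (m : Q -> Q -> Q) : Prop :=
  forall x y z w : Q, m (m x y) (m z w) = m (m x z) (m y w).

Definition left_cancellative {Q : Type} (m : Q -> Q -> Q) : Prop :=
  forall a x y : Q, m a x = m a y -> x = y.

Definition unipotent {Q : Type} (m : Q -> Q -> Q) : Prop :=
  forall x y : Q, m x x = m y y.

Definition is_unit {Q : Type} (m : Q -> Q -> Q) (u : Q) : Prop :=
  forall x : Q, m u x = x /\ m x u = x.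

Definition is_right_unit {Q : Type} (m : Q -> Q -> Q) (r : Q) : Prop :=
  forall x : Q, m x r = x.

(* Main.v *)
Require Import Defs.
From Stdlib Require Import Setoid.

Section W.
Variables (Q : Type) (mul : Q -> Q -> Q) (e : Q).
Hypothesis hW : ward_quasigroup mul.
Hypothesis he : forall x : Q, mul x x = e.

Lemma wid x y z : mul (mul x z) (mul y z) = mul x y.
Proof. destruct hW as [_ H]; apply H. Qed.

Lemma ldiv a b : exists x, mul a x = b.
Proof. destruct hW as [[H _] _]. destruct (H a b) as [x [Hx _]]. eauto. Qed.

Lemma rdiv a b : exists y, mul y a = b.
Proof. destruct hW as [[_ H] _]. destruct (H a b) as [x [Hx _]]. eauto. Qed.

Lemma lcan x a b : mul x a = mul x b -> a = b.
Proof.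
  destruct hW as [[H _] _]. intro E. destruct (H x (mul x a)) as [c [_ Hc]].
  rewrite (Hc a eq_refl), (Hc b (eq_sym E)). reflexivity.
Qed.

Lemma L1 a : mul a e = a.
Proof.
  destruct (ldiv a a) as [z Hz]. rewrite <- Hz at 1 2.
  rewrite <- (he z). rewrite wid. reflexivity.
Qed.

Lemma L2 a b : mul e (mul a b) = mul b a.
Proof. rewrite <- (he b). apply wid. Qed.

Lemma L3 a : mul e (mul e a) = a.
Proof.
  destruct (ldiv e a) as [y Hy]. subst a. rewrite L2, L1. reflexivity.
Qed.

Lemma LA x y z : mul (mul x y) z = mul x (mul z (mul e y)).
Proof.
  destruct (rdiv y z) as [c Hc]. subst z. rewrite !wid, L1. reflexivity.
Qed.

Lemma medial_of_C (C : forall y w, mul y (mul e w) = mul w (mul e y)) : medial mul.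
Proof.
  intros x y z w. rewrite (LA x y), (LA x z). f_equal.
  rewrite (C (mul z w) y), (C (mul y w) z), !L2.
  (* y(wz) = z(wy) *)
  assert (Hw : mul w z = mul (mul e z) (mul e w)).
  { rewrite C, L3. reflexivity. }
  rewrite Hw, <- LA, C, L2. reflexivity.
Qed.
End W.

Theorem theorem3p5 (Q : Type) (mul : Q -> Q -> Q) (e : Q)
  (hW : ward_quasigroup mul) (he : forall x : Q, mul x x = e) :
  (forall (dia : Q -> Q -> Q) (one : Q),
      is_unit dia one -> double_magma mul dia ->
      (forall x y : Q, dia x y = mul x (mul e y)) /\ medial mul) /\
  (medial mul ->
   forall (star : Q -> Q -> Q) (r : Q),
      left_cancellative star -> unipotent star -> is_right_unit star r ->
      double_magma (ret mul e) star ->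
      forall x y : Q, star x y = mul x y).
Proof.
  split.
  - intros dia one Hu D.
    assert (Hre : forall a, dia a e = a).
    { intro a. destruct (rdiv _ _ hW one a) as [x Hx]. subst a.
      rewrite <- (he one). rewrite D. rewrite (proj2 (Hu x)), (proj1 (Hu one)). reflexivity. }
    assert (Hle : forall a, dia e a = a).
    { intro a. destruct (ldiv _ _ hW one a) as [x Hx]. subst a.
      rewrite <- (he one) at 1. rewrite D. rewrite (proj1 (Hu one)), (proj1 (Hu x)). reflexivity. }
    assert (Ho : one = e).
    { rewrite <- (Hre one). apply (proj1 (Hu e)). }
    subst one.
    assert (Hf : forall a b, dia a (mul e b) = mul a b).
    { intros a b. rewrite <- (L1 _ _ _ hW he a) at 1. rewrite D, Hre, Hle. reflexivity. }
    assert (Hd : forall x y, dia x y = mul x (mul e y)).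
    { intros x y. rewrite <- (L3 _ _ _ hW he y) at 1. apply Hf. }
    split; [exact Hd|].
    apply (medial_of_C _ _ _ hW he).
    intros y w.
    apply (lcan _ _ hW e).
    pose proof (D e y e w) as Dw. rewrite !Hd in Dw.
    rewrite !(L3 _ _ _ hW he) in Dw.
    rewrite (LA _ _ _ hW he) in Dw. symmetry. exact Dw.
  - intros _ star r _ U R D x y.
    assert (Oe : forall a, ret mul e a e = a).
    { intro a. unfold ret. rewrite he. apply (L1 _ _ _ hW he). }
    assert (eO : forall a, ret mul e e a = a).
    { intro a. unfold ret. apply (L3 _ _ _ hW he). }
    assert (Sxe : forall a, star a e = a).
    { intro a. rewrite <- (R a) at 2. rewrite <- (Oe a) at 2. rewrite <- (eO r).
      rewrite D, R, Oe. reflexivity. }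
    assert (Sex : forall a, star e a = mul e a).
    { intro a. assert (E : star a a = e).
      { rewrite (U a e). apply Sxe. }
      assert (E2 : star (ret mul e a e) (ret mul e e a) = e) by (rewrite Oe, eO; exact E).
      rewrite D, Sxe in E2. unfold ret in E2.
      assert (E3 : mul a (mul e (star e a)) = mul a a) by (rewrite he; exact E2).
      clear E E2. rename E3 into E.
      apply (lcan _ _ hW) in E.
      rewrite <- E at 2. symmetry. apply (L3 _ _ _ hW he). }
    transitivity (star (ret mul e x e) (ret mul e e y)); [rewrite Oe, eO; reflexivity|].
    rewrite D, Sxe, Sex. unfold ret.
    rewrite (L3 _ _ _ hW he). reflexivity.
Qed.
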